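(* Let $a,b$ be positive integers with $\gcd(a,b)=1$. For all $\pi\in\mathcal{D}_{b,-a}(a,b)$, $\widetilde\rho(\tilde f(\pi))=\rho_{\mathrm{AHJ}}(f(\pi))$.
   Context: Partitions are drawn in English convention in the first quadrant; a partition fitting in the $a\times b$ rectangle has as frontier a lattice path from $(0,0)$ to $(b,a)$ with unit north (N) and east (E) steps, its diagram being the unit squares above and to the left of the path. For a word $u$ with finitely many N's, $\mathrm{ptn}(u)$ is the partition whose parts are, for each N of $u$, the number of E's preceding it (zero parts discarded). The hook-length of a cell $c$ is the number of cells among $c$, the cells below it in its column and those to its right in its row. The $(b,-a)$-level of a lattice point $(x,y)$ is $by-ax$; a unit square $[x,x+1]\times[y,y+1]$ has the level of its southeast corner. Under the west-south convention, a step gets the level of its starting point. $\mathcal{D}_{b,-a}(a,b)$ is the set of partitions with at most $a$ parts, each at most $b$, whose frontier path visits only points of nonnegative level. For $\pi\in\mathcal{D}_{b,-a}(a,b)$ let $L(\pi)$ be the set of levels of unit squares lying above the line $by=ax$ and below the frontier path of $\pi$ (distinct positive integers). $f(\pi)$ is the unique partition whose first-column hook-lengths are exactly the elements of $L(\pi)$. Let $z=z_0z_1\cdots$ with $z_0=\mathrm{E}$ and, for $i>0$, $z_i=\mathrm{N}$ iff $i\in L(\pi)$ (else $\mathrm{E}$); $\tilde f(\pi)=\mathrm{ptn}(z)$. Let $y$ be the subword of $z$ of those $z_i$ ($i\ge0$) such that $i+a$ is the west-south level of some step of the frontier path of $\pi$; $\widetilde\rho(\tilde f(\pi))=\mathrm{ptn}(y)$.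 $\rho_{\mathrm{AHJ}}(f(\pi))$ is the partition having one row for each row of $\nu=f(\pi)$ whose first-column hook-length equals the level of a square lying directly east of a north step of the frontier path of $\pi$ (the square $[x,x+1]\times[y,y+1]$ for a north step from $(x,y)$ to $(x,y+1)$), that row having length equal to the number of cells in the corresponding row of $\nu$ with hook-length at most $b$. *)

(* Defs.v *)
From mathcomp Require Import all_boot all_order all_algebra.
Set Implicit Arguments.
Unset Strict Implicit.
Unset Printing Implicit Defensive.
Import GRing.Theory Num.Theory.

(* Words in N/E steps: [true] = N (north), [false] = E (east). *)

Definition is_partition (s : seq nat) : bool :=
  sorted geq s && all (fun p => 0 < p) s.

Definition mkptn (s : seq nat) : seq nat := sort geq [seq p <- s | 0 < p].

Definition ptn (u : seq bool) : seq nat :=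
  mkptn [seq count negb (take k u) | k <- iota 0 (size u) & nth false u k].

(* Frontier path of a partition pi fitting in the a x b box (English
   convention, first quadrant): the row at height y (0 <= y < a), i.e.
   [y, y+1], is row number a-1-y (0-based, from the top) of pi.
   rowlen_below y = length of the row at height y-1 (0 for y = 0). *)
Definition rowlen_below (a : nat) (pi : seq nat) (y : nat) : nat :=
  if y == 0 then 0 else nth 0 pi (a - y).

Definition frontier (a b : nat) (pi : seq nat) : seq bool :=
  flatten [seq rcons (nseq (rowlen_below a pi y.+1 - rowlen_below a pi y) false) true
          | y <- iota 0 a]
  ++ nseq (b - rowlen_below a pi a) false.

Fixpoint walk (p : nat * nat) (w : seq bool) : seq (nat * nat) :=
  match w with
  | [::] => [:: p]
  | s :: w' => p :: walk (if s then (p.1, p.2.+1) else (p.1.+1, p.2)) w'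
  end.

Definition steps (w : seq bool) : seq ((nat * nat) * bool) :=
  zip (walk (0, 0) w) w.

Definition level (a b x y : nat) : int := (Posz (b * y)) - (Posz (a * x)).

Definition inD (a b : nat) (pi : seq nat) : bool :=
  [&& is_partition pi, size pi <= a, all (fun p => p <= b) pi &
      all (fun q => (0 <= level a b q.1 q.2)%R) (walk (0, 0) (frontier a b pi))].

(* Unit square [x,x+1]x[y,y+1] (x < b, y < a) belongs to the diagram of pi. *)
Definition in_diagram (a : nat) (pi : seq nat) (x y : nat) : bool :=
  x < nth 0 pi (a - y.+1).

(* L(pi): levels (level of the SE corner (x+1,y)) of unit squares of the
   a x b rectangle lying (weakly) above the line b y = a x -- i.e. all of the
   square has nonnegative level, its minimum being at the SE corner -- and
   below the frontier path (i.e. not in the diagram). *)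
Definition Lset (a b : nat) (pi : seq nat) : seq int :=
  [seq level a b xy.1.+1 xy.2
  | xy <- [seq (x, y) | x <- iota 0 b, y <- iota 0 a]
  & (a * xy.1.+1 <= b * xy.2) && ~~ in_diagram a pi xy.1 xy.2].

Definition zword (a b : nat) (pi : seq nat) (i : nat) : bool :=
  if i == 0 then false else ((Posz i) \in Lset a b pi).

Definition step_levels (a b : nat) (pi : seq nat) : seq int :=
  [seq level a b st.1.1 st.1.2 | st <- steps (frontier a b pi)].

(* y: subword of z of the z_i with i + a a west-south step level.  All step
   levels are <= a*b (points have 0 <= y <= a, x >= 0), so only indices
   i < a*b+1 can qualify; the bound is harmless. *)
Definition yword (a b : nat) (pi : seq nat) : seq bool :=
  [seq zword a b pi i | i <- iota 0 (a * b).+1 & (Posz (i + a)) \in step_levels a b pi].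

Definition rhotilde_ftilde (a b : nat) (pi : seq nat) : seq nat := ptn (yword a b pi).

(* Hook length of the cell in row i, column j (0-based, English convention). *)
Definition hook (nu : seq nat) (i j : nat) : nat :=
  1 + (nth 0 nu i - j.+1)
    + count (fun r => j < nth 0 nu r) (iota i.+1 (size nu - i.+1)).

Definition first_col_hooks (nu : seq nat) : seq nat :=
  [seq hook nu i 0 | i <- iota 0 (size nu)].

(* Levels of the squares directly east of the north steps of the frontier:
   for a north step from (x,y), the square [x,x+1]x[y,y+1], whose level is
   that of its SE corner (x+1,y). *)
Definition east_of_N_levels (a b : nat) (pi : seq nat) : seq int :=
  [seq level a b st.1.1.+1 st.1.2 | st <- steps (frontier a b pi) & st.2].

Definition rhoAHJ (a b : nat) (pi nu : seq nat) : seq nat :=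
  mkptn [seq count (fun j => hook nu i j <= b) (iota 0 (nth 0 nu i))
        | i <- iota 0 (size nu) & (Posz (hook nu i 0)) \in east_of_N_levels a b pi].

(* Main.v *)
Require Import Defs.
From mathcomp Require Import all_boot all_order all_algebra zify.
Set Implicit Arguments.
Unset Strict Implicit.
Unset Printing Implicit Defensive.
Import GRing.Theory Num.Theory.

Lemma count_eq_iota (P : pred nat) c h :
  count (fun e => (e == c) && P e) (iota 0 h) = (c < h) && P c.
Proof.
elim: h => [|h IH] //. rewrite -addn1 iotaD count_cat /= add0n IH addn0.
have [->|ne] := eqVneq h c.
  by rewrite ltnn addn1 ltnS leqnn /=; case: (P c).
by rewrite /= addn0 addn1 ltnS ltn_neqAle eq_sym ne.
Qed.

Lemma bool_iff (x y : bool) : (x -> y) -> (y -> x) -> x = y.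
Proof. by case: x; case: y => // H1 H2; [have := H1 erefl | have := H2 erefl]. Qed.

Lemma count_split (T : Type) (a a1 a2 : pred T) s :
  (forall x, a x = a1 x + a2 x :> nat) -> count a s = count a1 s + count a2 s.
Proof.
move=> H; elim: s => //= x s ->; rewrite H; lia.
Qed.

Lemma W_aux (E N : pred nat) b h : 0 < b ->
  (forall e, N e = E e || ((b <= e) && N (e - b))) ->
  (forall e, E e -> (b <= e) && N (e - b) -> False) ->
  count (fun e => (h - b <= e) && N e) (iota 0 h) = count E (iota 0 h).
Proof.
move=> b0 NE Ndisj.
elim: h => [|h IH] //.
rewrite -addn1 iotaD !count_cat /= add0n !addn0 -IH.
rewrite (count_split (a := fun e => (h - b <= e) && N e)
   (a1 := fun e => (h + 1 - b <= e) && N e)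
   (a2 := fun e => (e == h - b) && ((b <= h) && N e))); last first.
  move=> e; case: (N e); rewrite ?andbT ?andbF //=.
  case: (ltnP b h.+1) => bh.
    have [->|ne] := eqVneq e (h - b); first by rewrite leqnn /=; lia.
    rewrite /= addn0; congr (nat_of_bool _); apply: bool_iff => H; move/eqP: ne => ne; lia.
  rewrite (_ : (e == h - b) && (b <= h) = false); last by apply/negbTE; apply/negP=> /andP[_ ?]; lia.
  rewrite addn0; congr (nat_of_bool _); apply: bool_iff => H; lia.
rewrite count_eq_iota.
have -> : h + 1 - b <= h by lia.
rewrite [in (true && N h)]NE andTb.
move: (count _ _) => C.
case: (ltnP (h - b) h) => hb.
  have Eh := Ndisj h; move: Eh.
  case: (E h); case: (b <= h); case: (N (h - b)) => //= H; try lia.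
have bh : (b <= h) = false by apply/negbTE; lia.
by rewrite bh /= orbF addn0.
Qed.

Lemma W_lemma (E : pred nat) b h : 0 < b ->
  (forall x y, E x -> E y -> x = y %[mod b] -> x = y) ->
  count (fun e => (h - b <= e) && has (fun x => E x && (x == e %[mod b])) (iota 0 e.+1))
    (iota 0 h) = count E (iota 0 h).
Proof.
move=> b0 Einj.
set N := fun e => has (fun x => E x && (x == e %[mod b])) (iota 0 e.+1).
have NE : forall e, N e = E e || ((b <= e) && N (e - b)).
  move=> e; apply/idP/idP.
  - case/hasP=> x; rewrite mem_iota add0n ltnS => xe /andP[Ex xm].
    have [exe|ne] := eqVneq x e; first by rewrite -exe Ex.
    have xle : x < e by rewrite ltn_neqAle ne xe.
    move: xm; rewrite eq_sym eqn_mod_dvd ?(ltnW xle) // => dv.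
    have e0 : 0 < e - x by rewrite subn_gt0.
    have := dvdn_leq e0 dv => bl.
    apply/orP; right; apply/andP; split; first lia.
    apply/hasP; exists x; first by rewrite mem_iota; lia.
    rewrite Ex /= eq_sym eqn_mod_dvd; last lia.
    have -> : e - b - x = (e - x) - b by lia.
    exact: dvdn_sub dv (dvdnn b).
  - case/orP=> [Ee|/andP[be /hasP[x]]].
      by apply/hasP; exists e; rewrite ?mem_iota ?Ee ?eqxx //; lia.
    rewrite mem_iota add0n => xe /andP[Ex xm]; apply/hasP; exists x.
      rewrite mem_iota; lia.
    by rewrite Ex /= (eqP xm) -{2}(subnK be) modnDr.
have Ndisj : forall e, E e -> (b <= e) && N (e - b) -> False.
  move=> e Ee /andP[be /hasP[x]]; rewrite mem_iota => xe /andP[Ex xm].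
  have := Einj _ _ Ex Ee; rewrite (eqP xm) -{2}(subnK be) modnDr => /(_ erefl).
  lia.
exact: W_aux.
Qed.

Definition Gp (u : seq bool) : seq nat :=
  [seq count negb (take k u) | k <- iota 0 (size u) & nth false u k].

Lemma Gp_rcons u x :
  Gp (rcons u x) = if x then rcons (Gp u) (count negb u) else Gp u.
Proof.
rewrite /Gp size_rcons -addn1 iotaD filter_cat map_cat /= add0n.
rewrite nth_rcons ltnn eqxx.
have E1 : [seq count negb (take k (rcons u x)) | k <- iota 0 (size u) & nth false (rcons u x) k]
  = [seq count negb (take k u) | k <- iota 0 (size u) & nth false u k].
  rewrite (eq_in_filter (a2 := fun k => nth false u k)); last first.
    by move=> k; rewrite mem_iota add0n => /andP[_ ks]; rewrite nth_rcons ks.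
  apply/eq_in_map => k; rewrite mem_filter mem_iota add0n => /andP[_ ks].
  by rewrite -cats1 takel_cat // ltnW.
rewrite E1; clear E1; case: x => /=; last by rewrite cats0.
by rewrite -cats1 takel_cat // take_size cats1.
Qed.

Lemma Gp_filter (f P : pred nat) N :
  Gp [seq f i | i <- iota 0 N & P i] =
  [seq count (fun j => P j && ~~ f j) (iota 0 i) | i <- iota 0 N & P i && f i].
Proof.
elim: N => [|N IH] //.
rewrite -addn1 iotaD !filter_cat !map_cat /= add0n.
case: (P N) => /=.
  rewrite cats1 Gp_rcons IH; case: (f N) => /=; last by rewrite cats0.
  rewrite cats1; congr rcons.
  by rewrite count_map count_filter; apply: eq_count => j /=; rewrite andbC.
by rewrite !cats0.
Qed.

Lemma sorted_geq_nth (s : seq nat) i j : sorted geq s -> i <= j -> nth 0 s j <= nth 0 s i.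
Proof.
move=> ss ij; case: (ltnP j (size s)) => js; last by rewrite nth_default.
have := sorted_leq_nth (leT := geq) _ _ 0 ss; apply => //.
- by move=> x y z /= h1 h2; apply: leq_trans h2 h1.
- by move=> x /=.
- by rewrite inE; apply: leq_ltn_trans js.
Qed.

Lemma sorted_ltn_map (f : nat -> nat) m n : (forall j, f j < f j.+1) ->
  sorted ltn [seq f j | j <- iota m n].
Proof.
move=> fi; elim: n m => [|n IH] m //=.
case: n IH => [|n] IH //= ; rewrite fi /=. exact: (IH m.+1).
Qed.

Lemma count_mem_iota (H : seq nat) n : uniq H ->
  count (mem H) (iota 0 n) = count (fun x => x < n) H.
Proof.
move=> uH; rewrite -!size_filter; apply: perm_size; apply: uniq_perm.
- exact: filter_uniq (iota_uniq 0 n).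
- exact: filter_uniq.
- by move=> x; rewrite !mem_filter mem_iota add0n /= andbC.
Qed.

Section Part.
Variable nu : seq nat.
Hypothesis pnu : is_partition nu.
Local Notation k := (size nu).
Local Notation n_ i := (nth 0 nu i).

Lemma nu_le i j : i <= j -> n_ j <= n_ i.
Proof. by case/andP: pnu => s _; apply: sorted_geq_nth. Qed.

Lemma nu_pos i : i < k -> 0 < n_ i.
Proof. by case/andP: pnu => _ /all_nthP; apply. Qed.

Lemma count_all_iota (P : pred nat) m n : (forall i, m <= i < m + n -> P i) ->
  count P (iota m n) = n.
Proof.
move=> H; rewrite (eq_in_count (a2 := predT)) ?count_predT ?size_iota //.
by move=> i; rewrite mem_iota => /H.
Qed.

Lemma hook0 i : i < k -> hook nu i 0 = n_ i + (k - i.+1).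
Proof.
move=> ik; rewrite /hook count_all_iota; last first.
  move=> s hs; apply: nu_pos; lia.
have := nu_pos ik; lia.
Qed.

Lemma hook0_lt i j : i < j -> j < k -> hook nu j 0 < hook nu i 0.
Proof.
move=> ij jk; rewrite !hook0 //; last lia.
have := nu_le (ltnW ij); lia.
Qed.

Definition H := first_col_hooks nu.

Lemma uniq_H : uniq H.
Proof.
rewrite /H /first_col_hooks map_inj_in_uniq ?iota_uniq //.
move=> i j; rewrite !mem_iota => ik' jk' e.
have ik : i < k by lia.
have jk : j < k by lia.
case: (ltngtP i j) => // ij.
  by have := hook0_lt ij jk; rewrite e ltnn.
by have := hook0_lt ij ik; rewrite e ltnn.
Qed.

Lemma memH e : (e \in H) = has (fun s => e == hook nu s 0) (iota 0 k).
Proof.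
apply/mapP/hasP => [[s sk ->]|[s sk /eqP ->]]; by exists s.
Qed.

Variable r : nat.
Hypothesis rk : r < k.
Local Notation h := (hook nu r 0).

Definition mm j := count (fun s => n_ s <= j) (iota r.+1 (k - r.+1)).
Definition ee j := j + mm j.

Lemma hook_ee j : j < n_ r -> hook nu r j + ee j = h.
Proof.
move=> jr; rewrite /ee /mm hook0 // /hook.
have := count_predC (fun s => j < n_ s) (iota r.+1 (k - r.+1)).
rewrite size_iota.
rewrite (eq_count (a1 := predC _) (a2 := fun s => n_ s <= j)); last first.
  by move=> s /=; rewrite -leqNgt.
lia.
Qed.

Lemma ee_inc j : ee j < ee j.+1.
Proof.
rewrite /ee /mm; have : count (fun s => n_ s <= j) (iota r.+1 (k - r.+1))
  <= count (fun s => n_ s <= j.+1) (iota r.+1 (k - r.+1)).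
  by apply: sub_count => s /= hs; lia.
lia.
Qed.

Lemma ee_notin j : j < n_ r -> ee j \notin H.
Proof.
move=> jr; rewrite memH; apply/hasPn => s; rewrite mem_iota add0n => /andP[_ sk].
rewrite hook0 //.
case: (leqP (n_ s) j) => hs.
  (* s > r, and all rows t >= s have n_ t <= j *)
  have rs : r < s.
    case: (ltnP r s) => // sr; have := nu_le sr; lia.
  have : k - s <= mm j.
    rewrite /mm (_ : k - r.+1 = (s - r.+1) + (k - s)); last lia.
    rewrite iotaD count_cat (_ : r.+1 + (s - r.+1) = s); last lia.
    rewrite (count_all_iota (n := k - s)); first lia.
    move=> t ht; have := @nu_le s t; lia.
  rewrite /ee; lia.
have : mm j <= k - s.+1.
  rewrite /mm.
  case: (ltnP r s) => rs.
    rewrite (_ : k - r.+1 = (s - r) + (k - s.+1)); last lia.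
    rewrite iotaD count_cat (_ : r.+1 + (s - r) = s.+1); last lia.
    rewrite (_ : count _ (iota r.+1 (s - r)) = 0).
      by rewrite add0n; apply: (leq_trans (count_size _ _)); rewrite size_iota.
    apply/eqP; rewrite -leqn0 leqNgt -has_count; apply/hasPn => t.
    rewrite mem_iota => ht; rewrite -ltnNge; have := @nu_le t s; lia.
  apply: (leq_trans (count_size _ _)); rewrite size_iota; lia.
rewrite /ee; lia.
Qed.

Lemma part_count b :
  count (fun j => hook nu r j <= b) (iota 0 (n_ r)) =
  count (fun e => (h - b <= e) && (e \notin H)) (iota 0 h).
Proof.
set S1 := [seq ee j | j <- iota 0 (n_ r)].
set S2 := [seq e <- iota 0 h | e \notin H].
have sS1 : sorted ltn S1 by apply: sorted_ltn_map; apply: ee_inc.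
have uS1 : uniq S1 by apply: sorted_uniq sS1; [exact: ltn_trans | exact: ltnn].
have sub : {subset S1 <= S2}.
  move=> e /mapP [j]; rewrite mem_iota add0n => /andP[_ jr] ->.
  rewrite mem_filter ee_notin // mem_iota /=.
  have := hook_ee jr; rewrite /hook; lia.
have sz : size S2 <= size S1.
  rewrite size_map size_iota size_filter.
  have := count_predC (mem H) (iota 0 h); rewrite size_iota.
  rewrite count_mem_iota ?uniq_H //.
  have -> : count (fun x => x < h) H = k - r.+1.
    rewrite /H /first_col_hooks count_map.
    rewrite (_ : k = r.+1 + (k - r.+1)) ?iotaD ?count_cat; last lia.
    rewrite add0n (_ : r.+1 + (k - r.+1) - r.+1 = k - r.+1); last lia.

    rewrite (eq_in_count (a2 := pred0)); last first.
      move=> s; rewrite mem_iota => sr0; apply/negbTE; rewrite /= -leqNgt.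
      case: (ltngtP s r) => sr'; [ |lia| by rewrite sr'].
      by apply: ltnW; apply: hook0_lt.
    rewrite count_pred0 add0n count_all_iota //.
    move=> s hs /=; apply: hook0_lt; lia.
  rewrite hook0 //.
  have -> : count (predC (mem H)) (iota 0 (n_ r + (k - r.+1)))
           = count (fun e => e \notin H) (iota 0 (n_ r + (k - r.+1))) by [].
  lia.
have [_ eqS] := uniq_min_size uS1 sub sz.
have S12 : S1 = S2.
  apply: (irr_sorted_eq (leT := ltn)) => //; first exact: ltn_trans.
  - exact: ltnn.
  - by apply: sorted_filter; [exact: ltn_trans | exact: iota_ltn_sorted].
rewrite -count_filter -/S2 -S12 count_map.
apply: eq_in_count => j; rewrite mem_iota add0n => /andP[_ jr] /=.
have := hook_ee jr; rewrite /ee => he.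
apply: bool_iff => hb; lia.
Qed.

End Part.

Definition nxt (p : nat * nat) (s : bool) : nat * nat :=
  if s then (p.1, p.2.+1) else (p.1.+1, p.2).

Fixpoint stp (p : nat * nat) (w : seq bool) : seq ((nat * nat) * bool) :=
  if w is s :: w' then (p, s) :: stp (nxt p s) w' else [::].

Lemma zip_walk p w : zip (walk p w) w = stp p w.
Proof. by elim: w p => [|s w IH] p //=; rewrite IH. Qed.

Lemma stp_cat p u v : stp p (u ++ v) = stp p u ++ stp (foldl nxt p u) v.
Proof. by elim: u p => [|s u IH] p //=; rewrite IH. Qed.

Lemma stp_walk p w st : st \in stp p w -> nxt st.1 st.2 \in walk p w.
Proof.
elim: w p => [|s w IH] p //=; rewrite inE => /orP[/eqP -> | /IH H].
  by rewrite inE; apply/orP; right; case: (w) => /= *; rewrite inE eqxx.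
by rewrite inE H orbT.
Qed.

Lemma stp_nseq p n x y d :
  (((x, y), d) \in stp p (nseq n false)) = [&& ~~ d, y == p.2 & p.1 <= x < p.1 + n].
Proof.
elim: n p => [|n IH] p /=; first by rewrite addn0 in_nil; symmetry; apply/negP => /and4P[_ _ h1 h2]; lia.
rewrite inE IH /= addnS; case: p => p1 p2 /=.
apply/idP/idP.
  case/orP => [/eqP [-> -> ->]|/and3P[-> -> /andP[h1 h2]]] /=; first by rewrite eqxx leqnn /= ltnS leq_addr.
  by apply/andP; split; lia.
case/and3P=> nd /eqP -> /andP[h1 h2].
have [->|ne] := eqVneq x p1; first by rewrite (negbTE nd) eqxx.
apply/orP; right; rewrite nd eqxx /=; apply/andP; split; move/eqP: ne => ne; lia.
Qed.

Lemma foldl_nseq p n : foldl nxt p (nseq n false) = (p.1 + n, p.2).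
Proof. by elim: n p => [|n IH] [p1 p2] /=; rewrite ?addn0 // IH /= addnS. Qed.

Section Geo.
Variables (a b : nat) (pi : seq nat).
Hypotheses (a0 : 0 < a) (b0 : 0 < b) (cop : coprime a b) (Dpi : inD a b pi).

Local Notation rb := (rowlen_below a pi).
Definition qq y := nth 0 pi (a - y.+1).

Lemma rbS y : rb y.+1 = qq y.
Proof. by []. Qed.

Lemma pi_sorted : sorted geq pi.
Proof. by case/and4P: Dpi => /andP[]. Qed.

Lemma pi_le_b i : nth 0 pi i <= b.
Proof.
case/and4P: Dpi => _ _ /allP H _; case: (ltnP i (size pi)) => ip.
  by apply: H; apply: mem_nth.
by rewrite nth_default.
Qed.

Lemma walk_ge0 x y : (x, y) \in walk (0, 0) (frontier a b pi) -> a * x <= b * y.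
Proof.
case/and4P: Dpi => _ _ _ /allP H /H /=; rewrite /level subr_ge0 lez_nat //.
Qed.

Lemma rb_mono y y' : y <= y' -> rb y <= rb y'.
Proof.
move=> yy; rewrite /rowlen_below; case: (y =P 0) => [_|y0]; first by [].
case: (y' =P 0) => [y'0|_]; first lia.
by apply: sorted_geq_nth pi_sorted _; lia.
Qed.

Lemma rb_le_b y : rb y <= b.
Proof. by rewrite /rowlen_below; case: eqP => // _; apply: pi_le_b. Qed.

Lemma qq_mono y y' : y <= y' -> qq y <= qq y'.
Proof. by move=> yy; rewrite -!rbS; apply: rb_mono. Qed.

Definition blk y := rcons (nseq (rb y.+1 - rb y) false) true.

Definition rowP y (st : (nat * nat) * bool) :=
  let: ((x, y'), d) := st in (y' == y) && (if d then x == qq y else rb y <= x < qq y).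

Lemma blk_fold y : foldl nxt (rb y, y) (blk y) = (rb y.+1, y.+1).
Proof.
rewrite /blk -cats1 foldl_cat foldl_nseq /= subnKC //; exact: rb_mono.
Qed.

Lemma blk_mem y st : (st \in stp (rb y, y) (blk y)) = rowP y st.
Proof.
case: st => [[x y'] d].
rewrite /blk -cats1 stp_cat foldl_nseq mem_cat stp_nseq /= inE subnKC; last exact: rb_mono.
case: d => /=; rewrite !xpair_eqE rbS ?andbT ?andbF ?orbF //; by rewrite andbC.

Qed.

Lemma flat_fold n : foldl nxt (0, 0) (flatten [seq blk y | y <- iota 0 n]) = (rb n, n).
Proof.
elim: n => [|n IH] //.
by rewrite -addn1 iotaD map_cat flatten_cat foldl_cat IH /= cats0 blk_fold addn1.
Qed.

Lemma flat_mem n st : (st \in stp (0, 0) (flatten [seq blk y | y <- iota 0 n]))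
  = has (rowP ^~ st) (iota 0 n).
Proof.
elim: n => [|n IH] //.
rewrite -addn1 iotaD map_cat flatten_cat stp_cat mem_cat IH flat_fold has_cat /=.
by rewrite cats0 blk_mem orbF.
Qed.

Definition stepP (st : (nat * nat) * bool) :=
  let: ((x, y), d) := st in
  if d then (y < a) && (x == qq y)
  else ((y < a) && (rb y <= x < qq y)) || ((y == a) && (rb a <= x < b)).

Lemma mem_steps st : (st \in steps (frontier a b pi)) = stepP st.
Proof.
rewrite /steps zip_walk /frontier stp_cat mem_cat flat_mem flat_fold.
case: st => [[x y] d].
rewrite stp_nseq /= subnKC; last exact: rb_le_b.
apply/idP/idP.
  case/orP.
    case/hasP => y0; rewrite mem_iota => hy /=; case/andP => /eqP -> H.
    case: d H => H; first by rewrite H; apply/andP; split; lia.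
    by rewrite H; apply/orP; left; apply/andP; split; [lia|].
  by case/and3P => nd /eqP -> H; rewrite (negbTE nd) /= eqxx H orbT.
case: d => /=.
  case/andP => ya /eqP ->; apply/orP; left; apply/hasP; exists y.
    by rewrite mem_iota; lia.
  by rewrite /= !eqxx.
case/orP => [/andP[ya H]| /andP[/eqP -> H]].
  apply/orP; left; apply/hasP; exists y; first by rewrite mem_iota; lia.
  by rewrite /= eqxx H.
by apply/orP; right; rewrite eqxx H.
Qed.

Lemma step_end_ge0 x y d : stepP ((x, y), d) -> a * (nxt (x, y) d).1 <= b * (nxt (x, y) d).2.
Proof.
rewrite -mem_steps /steps zip_walk => /stp_walk /=.
by case: (nxt (x, y) d) => x' y'; apply: walk_ge0.
Qed.

End Geo.

Lemma levelP a b h x y : (Posz h == level a b x y) = (h + a * x == b * y).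
Proof. by rewrite /level eq_sym subr_eq -PoszD eqz_nat eq_sym. Qed.

Lemma level_ge0 a b x y : (0 <= level a b x y)%R = (a * x <= b * y).
Proof. by rewrite /level subr_ge0 lez_nat. Qed.

Lemma lev_inj a b X X' Y Y' : 0 < b -> coprime a b -> 0 < X -> 0 < X' -> X <= b -> X' <= b ->
  b * Y + a * X' = b * Y' + a * X -> X = X' /\ Y = Y'.
Proof.
move=> b0 cop.
wlog: X X' Y Y' / X <= X'.
  move=> W X0 X0' Xb Xb' E; case: (leqP X X') => XX; first exact: W.
  have [] := W X' X Y' Y (ltnW XX) X0' X0 Xb' Xb; first lia.
  by move=> -> ->.
move=> XX X0 X0' Xb Xb' E.
have E2 : a * (X' - X) = b * (Y' - Y).
  rewrite !mulnBr.
  have : a * X <= a * X' by rewrite leq_mul2l XX orbT.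
  lia.
have dv : b %| X' - X.
  have cop' : coprime b a by rewrite coprime_sym.
  by rewrite -(Gauss_dvdr _ cop') E2 dvdn_mulr.
have XX' : X = X'.
  case: (posnP (X' - X)) => d0; first lia.
  have := dvdn_leq d0 dv; lia.
subst X'; split => //.
apply/eqP; rewrite -(eqn_pmul2l b0); apply/eqP; lia.
Qed.

Section B.
Variables (a b : nat) (pi : seq nat).
Hypotheses (a0 : 0 < a) (b0 : 0 < b) (cop : coprime a b) (Dpi : inD a b pi).

Local Notation SL := (step_levels a b pi).
Local Notation L := (Lset a b pi).
Local Notation zw := (zword a b pi).
Local Notation EN := (east_of_N_levels a b pi).
Local Notation sP := (stepP a b pi).
Local Notation q := (qq a pi).
Local Notation rb := (rowlen_below a pi).

Lemma msteps st : (st \in steps (frontier a b pi)) = sP st.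
Proof. exact: mem_steps a0 b0 cop Dpi st. Qed.

Lemma memSL s : reflect (exists x y d, sP ((x, y), d) /\ s + a * x = b * y) (Posz s \in SL).
Proof.
apply: (iffP mapP) => [[[[x y] d] hst /eqP]|[x [y [d [hs e]]]]].
  by rewrite levelP => /eqP e; exists x, y, d; split => //; rewrite -msteps.
by exists ((x, y), d); rewrite ?msteps //; apply/eqP; rewrite levelP e.
Qed.

Lemma memL h : reflect (exists x y, [/\ x < b, y < a, a * x.+1 <= b * y, q y <= x
   & h + a * x.+1 = b * y]) (Posz h \in L).
Proof.
apply: (iffP mapP) => [[[x y]]|[x [y [xb ya h1 h2 h3]]]].
  rewrite mem_filter => /andP[/= /andP[h1 h2]] /allpairsP [[x' y'] [/= hx hy [ex ey]]].
  subst x' y'; move/eqP; rewrite levelP => /eqP h3.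
  exists x, y; split => //; rewrite ?mem_iota in hx hy; try lia.
  by rewrite /in_diagram -leqNgt in h2.
exists (x, y); last by apply/eqP; rewrite levelP h3.
rewrite mem_filter /= h1 /in_diagram -leqNgt h2 /=.
by apply/allpairsP; exists (x, y); rewrite !mem_iota /=; split => //; lia.
Qed.

Lemma memEN h : reflect (exists x y, sP ((x, y), true) /\ h + a * x.+1 = b * y) (Posz h \in EN).
Proof.
apply: (iffP mapP) => [[[[x y] d]]|[x [y [hs e]]]].
  rewrite mem_filter /= => /andP[dd]; rewrite msteps => hs /eqP; rewrite levelP => /eqP e.
  by move: dd hs e; case: d => //= _ hs e; exists x, y.
by exists ((x, y), true); rewrite ?mem_filter ?msteps //; apply/eqP; rewrite levelP e.
Qed.

Lemma zwE j : zw j = (j != 0) && (Posz j \in L).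
Proof. by rewrite /zword; case: eqP. Qed.

Lemma y_le_a x y d : sP ((x, y), d) -> y <= a.
Proof. by case: d => /=; [case/andP => ? _ | case/orP => /andP[? _]]; lia. Qed.

Lemma estep_notL x y j : sP ((x, y), false) -> j + a * x.+1 = b * y -> ~~ zw j.
Proof.
move=> hs e; rewrite zwE; apply/negP => /andP[j0 /memL [x' [y' [xb yb h1 h2 h3]]]].
have [xx yy] : x.+1 = x'.+1 /\ y = y'.
  apply: (lev_inj (a := a) (b := b)) => //; try lia.
  - move: hs => /= /orP[/andP[_ /andP[_ xq]]|/andP[/eqP ya /andP[_ xb']]]; last lia.
    have := @pi_le_b a b pi Dpi (a - y.+1); rewrite /qq in xq; lia.
move: hs => /= /orP[/andP[ya /andP[_ xq]]|/andP[/eqP ya _]]; last lia.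
subst y'; have : x = x' by lia.
move=> ?; subst x'; lia.
Qed.

Lemma nstep_L x y j : sP ((x, y), true) -> j + a * x.+1 = b * y -> zw j.
Proof.
move=> /= /andP[ya /eqP xq] e.
have xb : x <= b by rewrite xq; apply: (@pi_le_b a b pi Dpi).
have xb' : x < b.
  rewrite ltn_neqAle xb andbT; apply/eqP => xb2; subst x.
  have : b * y <= b * a.-1 by rewrite leq_mul2l; apply/orP; right; lia.
  have : b * a.-1 + b = a * b by rewrite -mulnSr prednK // mulnC.
  move: e; rewrite mulnS; lia.
rewrite zwE; apply/andP; split.
  apply/eqP => j0; subst j.
  have [] := lev_inj (a := a) (b := b) (X := x.+1) (X' := b) (Y := y) (Y' := a) b0 cop => //; try lia.
apply/memL; exists x, y; split => //; try lia.
Qed.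

Lemma EpP j : reflect (exists x y, sP ((x, y), false) /\ j + a * x.+1 = b * y)
  ((Posz (j + a) \in SL) && ~~ zw j).
Proof.
apply: (iffP andP) => [[/memSL [x [y [d [hs e]]]] nz]|[x [y [hs e]]]].
  case: d hs => hs; last by exists x, y; split => //; rewrite mulnS; lia.
  by have := nstep_L hs (j := j); rewrite mulnS (negbTE nz) => /(_ ltac:(lia)).
split; last exact: estep_notL hs e.
by apply/memSL; exists x, y, false; split => //; rewrite mulnS in e; lia.
Qed.

Lemma estep_col x y y' : sP ((x, y), false) -> sP ((x, y'), false) -> y = y'.
Proof.
wlog: y y' / y <= y'.
  move=> W h1 h2; case: (leqP y y') => yy; first exact: W.
  by symmetry; apply: W => //; apply: ltnW.
move=> yy /= h1 h2; case: (ltngtP y y') => // yy'.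
have := @qq_mono a b pi a0 b0 cop Dpi y y'.-1 ltac:(lia).
have : rb y' = q y'.-1 by rewrite -rbS prednK //; lia.
move: h1 h2 => /orP[/andP[_ /andP[_ h1]]|/andP[/eqP ya _]]; last lia.
move=> /orP[/andP[_ /andP[h2 _]]|/andP[/eqP ya' /andP[h2 _]]] E1 E2.
  by rewrite E1 in h2; have := leq_trans E2 h2; rewrite leqNgt h1.
by subst y'; rewrite E1 in h2; have := leq_trans E2 h2; rewrite leqNgt h1.
lia.
Qed.

End B.

Section C.
Variables (a b : nat) (pi : seq nat).
Hypotheses (a0 : 0 < a) (b0 : 0 < b) (cop : coprime a b) (Dpi : inD a b pi).

Local Notation SL := (step_levels a b pi).
Local Notation L := (Lset a b pi).
Local Notation zw := (zword a b pi).
Local Notation EN := (east_of_N_levels a b pi).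
Local Notation sP := (stepP a b pi).
Local Notation q := (qq a pi).
Local Notation rb := (rowlen_below a pi).

Definition Ep j := (Posz (j + a) \in SL) && ~~ zw j.

Lemma estep_xb x y : sP ((x, y), false) -> x < b.
Proof.
move=> /= /orP[/andP[_ /andP[_ h]]|/andP[_ /andP[_ h]]] //.
by apply: (leq_trans h); apply: (@pi_le_b a b pi Dpi).
Qed.

Lemma Ep_inj x x' : Ep x -> Ep x' -> x = x' %[mod b] -> x = x'.
Proof.
wlog: x x' / x <= x'.
  move=> W h1 h2 h3; case: (leqP x x') => xx; first exact: W.
  by symmetry; apply: W => //; apply: ltnW.
move=> xx /(EpP a0 b0 cop Dpi) [X [Y [hs e]]] /(EpP a0 b0 cop Dpi) [X' [Y' [hs' e']]] /eqP.
rewrite eq_sym eqn_mod_dvd // => /divnK.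
move: ((x' - x) %/ b) => t et.
have [XX YY] : X.+1 = X'.+1 /\ Y + t = Y'.
  apply: (lev_inj (a := a) (b := b)) => //.
  - by have := estep_xb hs.
  - by have := estep_xb hs'.
  rewrite mulnDr (mulnC b t); lia.
have XX' : X = X' by lia.
subst X'; have := estep_col a0 b0 cop Dpi hs hs'.
move=> YY'; subst Y'; have t0 : t = 0 by lia.
subst t; lia.
Qed.

Lemma ecol X : 0 < X <= b -> exists Y0, sP ((X.-1, Y0), false) /\
  (forall y, y < Y0 -> q y <= X.-1).
Proof.
move=> /andP[X0 Xb].
set p := fun y => X.-1 < q y.
set Y0 := find p (iota 0 a).
have bf : forall y, y < Y0 -> q y <= X.-1.
  move=> y yY; have := before_find 0 yY; rewrite nth_iota; last first.
    by apply: (leq_trans yY); have := find_size p (iota 0 a); rewrite size_iota.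
  by rewrite /p add0n => /negbT; rewrite -leqNgt.
exists Y0; split => //=.
case: (ltnP Y0 a) => Ya.
  have hp : has p (iota 0 a) by rewrite has_find size_iota.
  have := nth_find 0 hp; rewrite -/Y0 nth_iota // add0n /p => hq.
  rewrite hq andbT /=; apply/orP; left.
  move: bf Ya hq; clearbody Y0; case: Y0 => [|y] bf _ _ //.
  by rewrite rbS; apply: bf.
have Y0a : Y0 = a by have := find_size p (iota 0 a); rewrite size_iota; lia.
rewrite Y0a eqxx /=.
have -> : rb a = q a.-1 by rewrite -rbS prednK.
apply/andP; split; last lia.
by apply: bf; lia.
Qed.

Lemma notzwE j : ~~ zw j = has (fun x => Ep x && (x == j %[mod b])) (iota 0 j.+1).
Proof.
apply/idP/idP; last first.
  case/hasP => x; rewrite mem_iota add0n ltnS => xj /andP[/(EpP a0 b0 cop Dpi) [x0 [y0 [hs e]]]].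
  rewrite eq_sym eqn_mod_dvd // => /divnK; move: ((j - x) %/ b) => t et.
  rewrite zwE; apply/negP => /andP[j0 /(memL a0 b0 cop Dpi) [x' [y' [xb yb h1 h2 h3]]]].
  have [XX YY] : x0.+1 = x'.+1 /\ y0 + t = y'.
    apply: (lev_inj (a := a) (b := b)) => //; try lia.
    - by have := estep_xb hs.
  have xx : x0 = x' by lia.
  subst x' y'.
  move: hs => /= /orP[/andP[ya /andP[_ xq]]|/andP[/eqP ya _]]; last lia.
  have := @qq_mono a b pi a0 b0 cop Dpi y0 (y0 + t) (leq_addr _ _); lia.
move=> nz.
have cop' : coprime b a by rewrite coprime_sym.
have [u ub hu] := Bezoutl a b0.
move: hu; rewrite (eqP cop') => hu.
set X0 := (j * u) %% b.
set X := if X0 == 0 then b else X0.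
have XE : X %% b = X0.
  rewrite /X; case: eqP => [->|_]; first by rewrite modnn.
  by rewrite /X0 modn_mod.
have Xr : 0 < X <= b.
  rewrite /X; case: eqP => [_|/eqP]; first by rewrite b0 leqnn.
  by rewrite lt0n => ->; rewrite /X0 ltnW // ltn_pmod.
have dv : b %| j + a * X.
  rewrite /dvdn -modnDmr -modnMmr XE /X0 modnMmr modnDmr.
  rewrite (_ : j + a * (j * u) = j * (1 + u * a)); last first.
    by rewrite mulnDr muln1 mulnA (mulnC a j) -mulnA (mulnC a u).
  by rewrite -/(dvdn _ _) dvdn_mull.
move/divnK: dv; move: ((j + a * X) %/ b) => Y eY.
have [Y0 [hs bf]] := ecol Xr.
have ge0 := step_end_ge0 a0 b0 cop Dpi hs.
rewrite /= prednK in ge0; last lia.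
case: (leqP Y0 Y) => YY.
  apply/hasP; exists (b * Y0 - a * X).
    rewrite mem_iota add0n ltnS.
    have : b * Y0 <= b * Y by rewrite leq_mul2l YY orbT.
    lia.
  apply/andP; split.
    apply/(EpP a0 b0 cop Dpi); exists X.-1, Y0; split => //.
    rewrite prednK; lia.
  rewrite eq_sym eqn_mod_dvd; last first.
    have : b * Y0 <= b * Y by rewrite leq_mul2l YY orbT.
    lia.
  rewrite (_ : j - (b * Y0 - a * X) = b * (Y - Y0)); first exact: dvdn_mulr.
  rewrite mulnBr.
  have : b * Y0 <= b * Y by rewrite leq_mul2l YY orbT.
  lia.
exfalso; move/negP: nz; apply.
have Ya : Y < a.
  have := y_le_a a0 b0 cop Dpi hs; lia.
rewrite zwE; apply/andP; split.
  apply/eqP => j0; subst j.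
  have [] := lev_inj (a := a) (b := b) (X := X) (X' := b) (Y := Y) (Y' := a) b0 cop => //; try lia.
apply/(memL a0 b0 cop Dpi); exists X.-1, Y; split; try lia.
  by rewrite prednK; lia.
  exact: bf.
by rewrite prednK; lia.
Qed.

Lemma index_eq h : (Posz h \in L) && (Posz h \in EN) =
  (h < (a * b).+1) && ((Posz (h + a) \in SL) && zw h).
Proof.
apply/idP/idP.
  case/andP => /(memL a0 b0 cop Dpi) [x [y [xb ya h1 h2 h3]]] /(memEN a0 b0 cop Dpi) [x' [y' [hs e]]].
  apply/and3P; split.
  - have : b * y <= b * a.-1 by rewrite leq_mul2l; apply/orP; right; lia.
    have : b * a.-1 + b = a * b by rewrite -mulnSr prednK // mulnC.
    lia.
  - by apply/(memSL a0 b0 cop Dpi); exists x', y', true; split => //; rewrite mulnS in e; lia.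
  exact: (@nstep_L a b pi a0 b0 cop Dpi _ _ _ hs e).
case/and3P => _ /(memSL a0 b0 cop Dpi) [x [y [d [hs e]]]] z.
rewrite zwE in z; case/andP: (z) => _ ->; rewrite andTb.
case: d hs => hs.
  by apply/(memEN a0 b0 cop Dpi); exists x, y; split => //; rewrite mulnS; lia.
have := @estep_notL a b pi a0 b0 cop Dpi _ _ h hs; rewrite zwE z => /(_ ltac:(rewrite mulnS; lia)).
by [].
Qed.

End C.

Lemma mkptn_perm s t : perm_eq s t -> mkptn s = mkptn t.
Proof.
move=> pst; rewrite /mkptn; apply/perm_sortP.
- by move=> x y; apply: leq_total.
- by move=> x y z h1 h2; apply: leq_trans h2 h1.
- by move=> x y /andP[h1 h2]; apply/eqP; rewrite eqn_leq; apply/andP; split.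
exact: perm_filter.
Qed.

Lemma fch_pos nu e : e \in first_col_hooks nu -> 0 < e.
Proof. by case/mapP => s _ ->; rewrite /hook. Qed.

Theorem mainTheorem8 (a b : nat) :
  0 < a -> 0 < b -> coprime a b ->
  forall pi : seq nat, inD a b pi ->
  forall nu : seq nat, is_partition nu ->
  (forall h : nat, (h \in first_col_hooks nu) = ((Posz h) \in Lset a b pi)) ->
  rhotilde_ftilde a b pi = rhoAHJ a b pi nu.
Proof.
move=> a0 b0 cop pi Dpi nu pnu Hh.
have -> : rhotilde_ftilde a b pi = mkptn (Gp (yword a b pi)) by [].
rewrite /yword Gp_filter /rhoAHJ.
set F := fun i => count (Ep a b pi) (iota 0 i).
have CF : forall r, r \in [seq r <- iota 0 (size nu) | Posz (hook nu r 0) \in east_of_N_levels a b pi] ->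
   count (fun j => hook nu r j <= b) (iota 0 (nth 0 nu r)) = F (hook nu r 0).
  move=> r; rewrite mem_filter mem_iota add0n => /andP[_ /andP[_ rk]].
  rewrite (part_count pnu rk) /F -(W_lemma (hook nu r 0) b0 (Ep_inj a0 b0 cop Dpi)).
  apply: eq_count => e; congr andb.
  rewrite -(@notzwE a b pi a0 b0 cop Dpi) (@zwE a b pi) /H Hh.
  case: eqP => [->|_] //=.
  by rewrite -Hh; apply/negP => /fch_pos.
have -> : [seq count (fun j => hook nu r j <= b) (iota 0 (nth 0 nu r))
    | r <- iota 0 (size nu) & Posz (hook nu r 0) \in east_of_N_levels a b pi]
   = [seq F i | i <- [seq hook nu r 0
    | r <- iota 0 (size nu) & Posz (hook nu r 0) \in east_of_N_levels a b pi]].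
  by rewrite -map_comp; apply/eq_in_map.
apply: mkptn_perm.
rewrite (_ : [seq count _ (iota 0 i) | i <- _ & _] =
   [seq F i | i <- iota 0 (a * b).+1 & (Posz (i + a) \in step_levels a b pi) && zword a b pi i]) //.
apply: perm_map; apply: uniq_perm.
- exact: filter_uniq (iota_uniq _ _).
- apply: (subseq_uniq (map_subseq _ (filter_subseq _ _))).
  exact: uniq_H.
move=> h; rewrite mem_filter mem_iota add0n leq0n andTb andbC -(@index_eq a b pi a0 b0 cop Dpi).
apply/andP/mapP => [[hL hE]|[r]].
  rewrite -Hh in hL; case/mapP: hL => r rk hr.
  by exists r => //; rewrite mem_filter -hr hE.
rewrite mem_filter => /andP[hr rk] ->; split => //.
by rewrite -Hh; apply: map_f.
Qed.
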